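(* Let $n\ge2$, $d\ge1$, $k\ge1$, let $V\in\mathcal{C}^{k+1}(\mathbb{R}^d,\mathbb{R})$, and let $u:(0,+\infty)\to\mathbb{R}^d$ be a global solution of $\ddot u(r)=-\frac{n-1}{r}\dot u(r)+\nabla V(u(r))$ such that $u(r)\to u_\infty$ as $r\to+\infty$ for some $u_\infty\in\mathbb{R}^d$ with $\nabla V(u_\infty)=0$ and $D^2V(u_\infty)$ positive definite. Then $\dot u(r)\to0$ as $r\to+\infty$. *)

(* Defs.v *)
From HB Require Import structures.
From mathcomp Require Import all_boot all_order all_algebra.
From mathcomp Require Import all_classical all_reals all_analysis.
Set Implicit Arguments. Unset Strict Implicit. Unset Printing Implicit Defensive.
Import Order.TTheory GRing.Theory Num.Theory.
Import numFieldNormedType.Exports.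
Local Open Scope ring_scope.
Local Open Scope classical_set_scope.

Section Defs.
Variables (R : realType) (d : nat).

Definition ebasis (i : 'I_d) : 'rV[R]_d := delta_mx 0 i.

Definition partial (i : 'I_d) (f : 'rV[R]_d -> R) (x : 'rV[R]_d) : R :=
  'D_(ebasis i) f x.

Fixpoint Ck (m : nat) (f : 'rV[R]_d -> R) : Prop :=
  match m with
  | 0 => continuous f
  | m'.+1 => (forall x, differentiable f x) /\ (forall i, Ck m' (partial i f))
  end.

Definition grad (V : 'rV[R]_d -> R) (x : 'rV[R]_d) : 'rV[R]_d :=
  \row_i partial i V x.

Definition hessian (V : 'rV[R]_d -> R) (x : 'rV[R]_d) : 'M[R]_d :=
  \matrix_(i, j) partial j (partial i V) x.

Definition posdef (A : 'M[R]_d) : Prop :=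
  forall v : 'rV[R]_d, v != 0 -> 0 < (v *m A *m v^T) 0 0.

Definition is_solution (n : nat) (V : 'rV[R]_d -> R) (u : R -> 'rV[R]_d) :=
  forall r : R, 0 < r ->
    [/\ derivable u r 1, derivable (derive1 u) r 1 &
        derive1 (derive1 u) r
          = - (((n - 1)%:R / r) *: derive1 u r) + grad V (u r)].
End Defs.

(* Main.v *)
Require Import Defs.
From HB Require Import structures.
From mathcomp Require Import all_boot all_order all_algebra.
From mathcomp Require Import all_classical all_reals all_analysis.
From mathcomp Require Import ring lra.
Import Order.TTheory GRing.Theory Num.Theory.
Import numFieldNormedType.Exports.
Local Open Scope ring_scope.
Local Open Scope classical_set_scope.

Lemma nearoo (R : realType) (P : R -> Prop) : (\forall x \near +oo, P x) -> exists M : R, forall x, M < x -> P x.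
Proof. case=> M [Mr HM]. by exists M. Qed.

Lemma cvg0_bound {R : realType} {f : R -> R} {e : R} : f x @[x --> +oo] --> 0 -> 0 < e ->
  exists M : R, forall x, M < x -> `|f x| <= e.
Proof.
move=> /cvgrPdist_le /[apply] /nearoo [M HM]; exists M => x /HM.
by rewrite sub0r normrN.
Qed.

Lemma key (R : realType) (c : R) (z w g : R -> R) : 0 <= c ->
  (forall r : R, 0 < r -> is_derive r 1 z (w r)) ->
  (forall r : R, 0 < r -> is_derive r 1 w (- (c / r) * w r + g r)) ->
  z x @[x --> +oo] --> 0 -> g x @[x --> +oo] --> 0 -> w x @[x --> +oo] --> 0.
Proof.
move=> c0 dz dw zc gc.
apply/cvgrPdist_le => e e0.
have e8 : 0 < e / 8 by rewrite divr_gt0.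
have [Mz HMz] := cvg0_bound zc e8.
have [Mg HMg] := cvg0_bound gc e8.
pose M := Num.max (Num.max Mz Mg) (Num.max 1 c).
exists M; split; first by rewrite num_real.
move=> r Mr.
have hM t : r <= t -> [/\ Mz < t, Mg < t, 1 < t & c < t].
  move=> rt; move: (lt_le_trans Mr rt); rewrite /M !gt_max => /andP[/andP[-> ->] /andP[-> ->]].
  by [].
pose phi t := w t + c * (z t * t^-1).
pose dphi t := (- (c / t) * w t + g t) + c * (z t * (- t ^- 2 * 1) + t^-1 * w t).
have dphiE t : 0 < t -> dphi t = g t - c * z t / t ^+ 2.
  move=> t0; rewrite /dphi; field; by rewrite gt_eqF.
have dp (t : R) : 0 < t -> is_derive t 1 phi (dphi t).
  move=> t0.
  have h1 : is_derive t 1 (fun y : R => (id y)^-1) (- (id t) ^- 2 *: 1).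
    apply: is_deriveV; first by rewrite gt_eqF.
  have h2 := is_deriveM (dz t t0) h1.
  have h3 := is_deriveZ c h2.
  have h4 := is_deriveD (dw t t0) h3.
  exact: h4.
have r1 : 1 < r by have [] := hM r (lexx r).
have r0 : 0 < r by apply: lt_trans r1.
have pos t : r <= t -> 0 < t by move=> rt; apply: lt_le_trans rt.
have [xi xiI zE] : exists2 xi, xi \in `]r, r + 1[%R & z (r + 1) - z r = w xi * (r + 1 - r).
  apply: MVT; first by rewrite ltrDl.
    by move=> x /[!in_itv] /andP[rx _]; apply: dz; apply: pos; apply: ltW.
  apply: derivable_within_continuous => x /[!in_itv] /andP[rx _].
  by have [] := dz x (pos x rx).
move: xiI; rewrite in_itv /= => /andP[rxi xir].
have [zeta zI pE] : exists2 zeta, zeta \in `[r, xi]%R & phi xi - phi r = dphi zeta * (xi - r).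
  apply: MVT_segment; first exact: ltW.
    by move=> x /[!in_itv] /andP[rx _]; apply: dp; apply: pos; apply: ltW.
  apply: derivable_within_continuous => x /[!in_itv] /andP[rx _].
  by have [] := dp x (pos x rx).
move: zI; rewrite in_itv /= => /andP[rz zxi].
have bz t : r <= t -> `|z t| <= e / 8 by move=> /hM [] /HMz.
have bg t : r <= t -> `|g t| <= e / 8 by move=> /hM [] _ /HMg.
have bA t : r <= t -> `|c * (z t * t^-1)| <= e / 8.
  move=> rt; have [_ _ t1 ct] := hM t rt.
  rewrite mulrCA normrM; apply: le_trans (bz t rt).
  rewrite -[leRHS]mulr1 ler_wpM2l // ger0_norm; last by rewrite divr_ge0 // ltW // (pos t rt).
  by rewrite ler_pdivrMr ?mul1r ?(pos t rt) // ltW.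
have bd t : r <= t -> `|dphi t| <= e / 4.
  move=> rt; have [_ _ t1 ct] := hM t rt.
  rewrite dphiE ?(pos t rt) //.
  apply: le_trans (ler_normB _ _) _.
  have -> : e / 4 = e / 8 + e / 8 by field.
  apply: lerD; first exact: bg.
  apply: le_trans (bz t rt).
  rewrite -mulrA mulrCA normrM -[leRHS]mulr1 ler_wpM2l // ger0_norm; last by rewrite divr_ge0 // ?exprn_ge0 // ltW // (pos t rt).
  rewrite ler_pdivrMr ?mul1r ?exprn_gt0 ?(pos t rt) // expr2.
  apply: le_trans (ltW ct) _; rewrite -[leLHS]mulr1 ler_pM // ?ltW // ?(pos t rt) //; lra.
have bp : `|dphi zeta * (xi - r)| <= e / 4.
  rewrite normrM -[leRHS]mulr1 ler_pM //; first exact: bd.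
  rewrite ger0_norm; first lra.
  lra.
have bw : `|w xi| <= e / 4.
  move: zE; rewrite addrAC subrr add0r mulr1 => <-.
  apply: le_trans (ler_normB _ _) _.
  have -> : e / 4 = e / 8 + e / 8 by field.
  apply: lerD; apply: bz => //; rewrite lerDl //.
have := bA r (lexx r); have := bA xi (ltW rxi).
move: bp bw pE; rewrite /phi sub0r normrN.
rewrite !ler_norml => /andP[? ?] /andP[? ?] ? /andP[? ?] /andP[? ?].
apply/andP; split; lra.
Qed.


Lemma Ck_cont (R : realType) (d m : nat) (f : 'rV[R]_d -> R) : Ck m f -> continuous f.
Proof.
case: m => [//|m] [df _] x.
exact: differentiable_continuous.
Qed.

Theorem lemma2p1 (R : realType) (n d k : nat) (V : 'rV[R]_d -> R)
  (u : R -> 'rV[R]_d) (uinf : 'rV[R]_d) :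
  (2 <= n)%N -> (1 <= d)%N -> (1 <= k)%N ->
  Ck k.+1 V ->
  is_solution n V u ->
  u x @[x --> +oo] --> uinf ->
  grad V uinf = 0 ->
  posdef (hessian V uinf) ->
  derive1 u x @[x --> +oo] --> (0 : 'rV[R]_d).
Proof.
move=> n2 _ k1 [_ HV] sol uc g0 _.
have comp j : derive1 u x 0 j @[x --> +oo] --> (0 : R).
  pose c : R := (n - 1)%:R.
  apply: (@key R c (fun x => u x 0 j - uinf 0 j) (fun x => derive1 u x 0 j)
            (fun x => partial j V (u x))).
  - exact: ler0n.
  - move=> r r0; have [du _ _] := sol r r0.
    have := du; rewrite derivable_mxP => /(_ 0 j) /derivableP h.
    have h2 := is_deriveB h (is_derive_cst (uinf 0 j) r 1).
    apply: (is_derive_eq h2).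
    by rewrite subr0 derive1E derive_mx // mxE.
  - move=> r r0; have [_ ddu E] := sol r r0.
    have := ddu; rewrite derivable_mxP => /(_ 0 j) /derivableP h.
    apply: (is_derive_eq h).
    have E2 := derive_mx ddu.
    transitivity ('D_1 (derive1 u) r 0 j); first by rewrite E2 mxE.
    by rewrite -derive1E E !mxE mulNr.
  - apply/subr_cvg0.
    exact: (cvg_comp _ _ uc (@coord_continuous _ 1 d 0 j uinf)).
  - have <- : partial j V uinf = 0 
      by have := congr1 (fun M : 'rV[R]_d => M 0 j) g0; rewrite !mxE.
    have := HV j; case: k k1 {HV} => [//|k' _] Hk.
    exact: (cvg_comp _ _ uc (@Ck_cont R d k'.+1 _ Hk uinf)).
apply/cvgrPdist_le => e e0.
have Hc j : \forall x \near +oo, `|0 - derive1 u x 0 j| <= e.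
  by move/cvgrPdist_le: (comp j) => /(_ e e0).
near=> x.
rewrite [leLHS]/Num.Def.normr/= mx_normrE (bigmax_le _ (ltW e0))//= => -[i j] _.
rewrite !mxE /= ord1; clear i.
move: j; near: x; apply: filter_forall => j.
exact: Hc.
Unshelve. all: by end_near.
Qed.
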